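(* Let $F$ be an Archimedean vector lattice. The order convergence on $F$ is idempotent: if $(f_{\alpha})_{\alpha\in A},(g_{\beta})_{\beta\in B}\subset F_{+}$ are nets with $g_{\beta}\xrightarrow{o} 0_{F}$ and $(f_{\alpha}-g_{\beta})^{+}\xrightarrow[\alpha]{o} 0_{F}$ for every $\beta\in B$, then $f_{\alpha}\xrightarrow{o} 0_{F}$.
   Context: A net $(f_\alpha)$ in $F$ order converges to $f$ (written $f_\alpha\xrightarrow{o}f$) if there exists $G\subset F$ with $\bigwedge G=0_F$ such that for every $g\in G$ there is $\alpha_0$ with $|f_\alpha-f|\le g$ for all $\alpha\ge\alpha_0$. *)

(* Defs.v *)
From HB Require Import structures.
From mathcomp Require Import all_boot all_order all_algebra.
From mathcomp Require Import reals.
Set Implicit Arguments. Unset Strict Implicit. Unset Printing Implicit Defensive.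
Import Order.TTheory GRing.Theory Num.Theory.
Local Open Scope ring_scope.

Record vlattice (R : realType) (F : lmodType R) := VLattice {
  vle : F -> F -> Prop;
  vle_refl : forall x, vle x x;
  vle_anti : forall x y, vle x y -> vle y x -> x = y;
  vle_trans : forall x y z, vle x y -> vle y z -> vle x z;
  vle_add : forall x y z, vle x y -> vle (x + z) (y + z);
  vle_scale : forall (a : R) x y, 0 <= a -> vle x y -> vle (a *: x) (a *: y);
  vsup : F -> F -> F;
  vsup_ubl : forall x y, vle x (vsup x y);
  vsup_ubr : forall x y, vle y (vsup x y);
  vsup_least : forall x y z, vle x z -> vle y z -> vle (vsup x y) z
}.

Section VL.
Variables (R : realType) (F : lmodType R) (L : vlattice F).

Definition vpos (x : F) : F := vsup L x 0.
Definition vabs (x : F) : F := vsup L x (- x).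

Definition archimedean_vl : Prop :=
  forall x y : F, vle L 0 x -> (forall n : nat, vle L (x *+ n) y) -> x = 0.

Definition is_vinf (G : F -> Prop) (m : F) : Prop :=
  (forall g, G g -> vle L m g) /\
  (forall h, (forall g, G g -> vle L h g) -> vle L h m).

Definition oconv (I : Type) (leI : I -> I -> Prop) (x : I -> F) (l : F) : Prop :=
  exists G : F -> Prop, is_vinf G 0 /\
    forall g, G g -> exists a0 : I, forall a, leI a0 a -> vle L (vabs (x a - l)) g.
End VL.

Definition directed (I : Type) (leI : I -> I -> Prop) : Prop :=
  (exists i : I, True) /\
  (forall i, leI i i) /\
  (forall i j k, leI i j -> leI j k -> leI i k) /\
  (forall i j, exists k, leI i k /\ leI j k).

(* Main.v *)
Require Import Defs.
From HB Require Import structures.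
From mathcomp Require Import all_boot all_order all_algebra.
From mathcomp Require Import reals.
Import Order.TTheory GRing.Theory Num.Theory.
Local Open Scope ring_scope.

Section Aux.
Variables (R : realType) (F : lmodType R) (L : vlattice F).

Lemma le_add2 (x y z w : F) : vle L x y -> vle L z w -> vle L (x + z) (y + w).
Proof.
move=> hxy hzw; apply: (vle_trans (vle_add z hxy)).
rewrite (addrC y z) (addrC y w); exact: vle_add.
Qed.

Lemma le_subr (x y h : F) : vle L (x + h) y -> vle L x (y - h).
Proof. by move=> H; have := vle_add (- h) H; rewrite addrK. Qed.

Lemma le_addr (x y h : F) : vle L (x - h) y -> vle L x (y + h).
Proof. by move=> H; have := vle_add h H; rewrite subrK. Qed.

Lemma vabs_ge0 (x : F) : vle L 0 (vabs L x).
Proof.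
set v := vabs L x.
have h2 : vle L 0 (v + v).
  rewrite -(subrr x); apply: le_add2; [exact: vsup_ubl | exact: vsup_ubr].
have h0 : (0 : R) <= 2%:R^-1 by rewrite invr_ge0 ler0n.
have := vle_scale h0 h2.
rewrite scaler0 -mulr2n -scaler_nat scalerA mulVf ?scale1r //.
by rewrite pnatr_eq0.
Qed.

Lemma vabs_pos (x : F) : vle L 0 x -> vle L (vabs L x) x.
Proof.
move=> hx; apply: vsup_least; first exact: vle_refl.
apply: (vle_trans _ hx).
have := vle_add (- x) hx; by rewrite add0r subrr.
Qed.
End Aux.
Arguments vabs_ge0 {R F} L x.
Arguments vabs_pos {R F L x}.
Arguments le_add2 {R F L x y z w}.
Arguments le_subr {R F L x y h}.
Arguments le_addr {R F L x y h}.

Theorem proposition4p5 (R : realType) (F : lmodType R) (L : vlattice F)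
  (Harch : archimedean_vl L)
  (A : Type) (leA : A -> A -> Prop) (HA : directed leA)
  (B : Type) (leB : B -> B -> Prop) (HB : directed leB)
  (f : A -> F) (g : B -> F)
  (Hf : forall a, vle L 0 (f a)) (Hg : forall b, vle L 0 (g b))
  (Hgc : oconv L leB g 0)
  (Hfg : forall b, oconv L leA (fun a => vpos L (f a - g b)) 0) :
  oconv L leA f 0.
Proof.
case: HA => [[a1 _] [reflA _]].
case: HB => [_ [reflB _]].
case: Hgc => G' [[G'lb G'gl] G'ev].
exists (fun z => exists h b k, G' h /\ vle L (vabs L (g b - 0)) h /\
  (exists a0, forall a, leA a0 a -> vle L (vabs L (vpos L (f a - g b) - 0)) k)
  /\ z = k + h).
split; first split.
- move=> z [h [b [k [Gh [gbh [[a0 Ha0] ->]]]]]].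
  rewrite -(addr0 0); apply: le_add2.
  + exact: (vle_trans (vabs_ge0 L _) (Ha0 a0 (reflA a0))).
  + exact: (vle_trans (vabs_ge0 L _) gbh).
- move=> u Hu; apply: G'gl => h Gh.
  have [b0 Hb0] := G'ev h Gh.
  have gbh := Hb0 b0 (reflB b0).
  case: (Hfg b0) => H [[_ Hgl] Hev].
  have : vle L (u - h) 0.
    apply: Hgl => k Hk.
    have Hz : vle L u (k + h).
      apply: Hu; exists h, b0, k; split=> //; split=> //; split=> //.
      exact: Hev.
    by have := vle_add (- h) Hz; rewrite addrK.
  by move/le_addr; rewrite add0r.
- move=> z [h [b [k [Gh [gbh [[a0 Ha0] ->]]]]]].
  exists a0 => a Ha; rewrite subr0.
  apply: (vle_trans (vabs_pos (Hf a))).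
  rewrite -(subrK (g b) (f a)); apply: le_add2.
  + apply: (vle_trans _ (Ha0 a Ha)); rewrite subr0.
    apply: (vle_trans (vsup_ubl L _ 0)); exact: vsup_ubl.
  + apply: (vle_trans _ gbh); rewrite subr0; exact: vsup_ubl.
Qed.
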